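(* Let $X$, $Y_k$ ($k\in\mathbb N$) and norms $\|\cdot\|_{X\oplus Y_k}$ be as in the generalized $\ell^2$-sum setting. Let $X_1,X_2$ be subspaces of $X$ with $X=X_1\oplus X_2$, and let $c>0$. If for every $k\in\mathbb N$ $$\|x_1+x_2+y_k\|_{X\oplus Y_k}\ge\|x_1\|_X+c\|x_2+y_k\|_{X\oplus Y_k},\qquad x_1\in X_1,\ x_2\in X_2,\ y_k\in Y_k,$$ then $$\Big\|x_1+x_2+\sum_ky_k\Big\|_\Sigma\ge\|x_1\|_X+c\Big\|x_2+\sum_ky_k\Big\|_\Sigma$$ for every $x_1+x_2+\sum_ky_k\in\Sigma(X\oplus Y_k)$ with $x_1\in X_1$, $x_2\in X_2$, $y_k\in Y_k$.
   Context: Setting: $(X,\|\cdot\|_X)$ and $(Y_k,\|\cdot\|_{Y_k})$, $k\in\mathbb N$, are Banach spaces; for each $k$, $\|\cdot\|_{X\oplus Y_k}$ is a norm on $X\oplus Y_k$ coinciding with $\|\cdot\|_X$ on $X$ and with $\|\cdot\|_{Y_k}$ on $Y_k$, and monotone: $\|x+y_k\|_{X\oplus Y_k}\ge\|x\|_X$. Duals of direct sums are identified with direct sums of duals via $(x^*+y^* )(x+y)=x^*(x)+y^*(y)$. $\Lambda(X\oplus Y_k)$ is the set of functionals $x^*+\sum_k\alpha_ky_k^*$ with $x^*\in X^*$, $y_k^*\in Y_k^*$, $\|x^*+y_k^*\|_{X\oplus Y_k}\le1$ for all $k$, $0\le\alpha_k\le1$, $\sum\alpha_k^2\le1$. $\Sigma(X\oplus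 Y_k)=\{x+y_1+y_2+\dots:x\in X,y_k\in Y_k,\sum\|y_k\|_{Y_k}^2<\infty\}$ with $\|z\|_\Sigma=\sup\{|z^*(z)|:z^*\in\Lambda(X\oplus Y_k)\}$. *)

(* Defs.v *)
From HB Require Import structures.
From mathcomp Require Import all_boot all_order all_algebra.
From mathcomp Require Import all_classical all_reals all_analysis.
Set Implicit Arguments. Unset Strict Implicit. Unset Printing Implicit Defensive.
Import Order.TTheory GRing.Theory Num.Theory.
Import numFieldNormedType.Exports.
Local Open Scope classical_set_scope.
Local Open Scope ring_scope.

Section Defs.
Variable R : realType.

Definition is_subspace (V : lmodType R) (A : set V) : Prop :=
  A 0 /\ (forall a b, A a -> A b -> A (a + b)) /\ (forall (r : R) a, A a -> A (r *: a)).

Definition direct_sum_decomp (V : lmodType R) (X1 X2 : set V) : Prop :=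
  is_subspace X1 /\ is_subspace X2 /\
  (forall x, exists x1 x2, X1 x1 /\ X2 x2 /\ x = x1 + x2) /\
  (forall x, X1 x -> X2 x -> x = 0).

(* A norm N on X (+) Y (N x y = ||x + y||), coinciding with the given norms on
   X and on Y, and monotone: ||x + y|| >= ||x||. *)
Definition sum_norm (X Y : normedModType R) (N : X -> Y -> R) : Prop :=
  (forall x x' y y', N (x + x') (y + y') <= N x y + N x' y') /\
  (forall (a : R) x y, N (a *: x) (a *: y) = `|a| * N x y) /\
  (forall x y, N x y = 0 -> x = 0 /\ y = 0) /\
  (forall x, N x 0 = `|x|) /\
  (forall y, N 0 y = `|y|) /\
  (forall x y, `|x| <= N x y).

Definition is_functional (V : normedModType R) (f : V -> R) : Prop :=
  (forall (a : R) u v, f (a *: u + v) = a * f u + f v) /\ continuous f.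

Definition l2sum_setting (X : completeNormedModType R)
  (Y : nat -> completeNormedModType R) (N : forall k, X -> Y k -> R) : Prop :=
  forall k, sum_norm (N k).

(* (xs, (ys k), (alpha k)) represents the functional xs + sum_k alpha_k ys_k
   belonging to Lambda(X (+) Y_k): dual norm of xs + ys_k on X(+)Y_k is <= 1 for all k
   (written out as the dual norm bound), 0 <= alpha_k <= 1, sum alpha_k^2 <= 1. *)
Definition in_Lambda (X : completeNormedModType R)
  (Y : nat -> completeNormedModType R) (N : forall k, X -> Y k -> R)
  (xs : X -> R) (ys : forall k, Y k -> R) (alpha : nat -> R) : Prop :=
  is_functional xs /\ (forall k, is_functional (ys k)) /\
  (forall k x y, `|xs x + ys k y| <= N k x y) /\
  (forall k, 0 <= alpha k <= 1) /\
  (\sum_(k <oo) ((alpha k) ^+ 2)%:E <= 1)%E.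

(* z = x + y_1 + y_2 + ... lies in Sigma(X (+) Y_k). *)
Definition in_Sigma (X : completeNormedModType R)
  (Y : nat -> completeNormedModType R) (x : X) (y : forall k, Y k) : Prop :=
  (\sum_(k <oo) (`|y k| ^+ 2)%:E < +oo)%E.

Definition Lambda_eval (X : completeNormedModType R)
  (Y : nat -> completeNormedModType R)
  (xs : X -> R) (ys : forall k, Y k -> R) (alpha : nat -> R)
  (x : X) (y : forall k, Y k) : R :=
  xs x + limn (series (fun k => alpha k * ys k (y k))).

Definition Sigma_norm (X : completeNormedModType R)
  (Y : nat -> completeNormedModType R) (N : forall k, X -> Y k -> R)
  (x : X) (y : forall k, Y k) : R :=
  sup [set r : R | exists xs ys alpha,
         in_Lambda N xs ys alpha /\ r = `|Lambda_eval xs ys alpha x y| ].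

End Defs.

(* Main.v *)
Require Import Defs.
From HB Require Import structures.
From mathcomp Require Import all_boot all_order all_algebra.
From mathcomp Require Import all_classical all_reals all_analysis.
From mathcomp Require Import lra ring.
Import Order.TTheory GRing.Theory Num.Theory.
Import numFieldNormedType.Exports.
Local Open Scope classical_set_scope.
Local Open Scope ring_scope.

Section Aux.
Variable R : realType.

Lemma lin_facts (V : lmodType R) (f : V -> R) :
  (forall (a : R) u v, f (a *: u + v) = a * f u + f v) ->
  [/\ f 0 = 0, (forall u v, f (u - v) = f u - f v),
      (forall u v, f (u + v) = f u + f v) & (forall a u, f (a *: u) = a * f u)].
Proof.
move=> H.
have f0 : f 0 = 0 by have := H (-1) 0 0; rewrite scaler0 addr0 mulN1r addNr.
have fD u v : f (u + v) = f u + f v by have := H 1 u v; rewrite scale1r mul1r.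
have fZ a u : f (a *: u) = a * f u by have := H a u 0; rewrite !addr0 f0 addr0.
split => // u v; rewrite fD -scaleN1r fZ; lra.
Qed.

Lemma cont_of_bound (V : normedModType R) (f : V -> R) (C : R) : 0 < C ->
  (forall u v, f (u - v) = f u - f v) -> (forall u, `|f u| <= C * `|u|) ->
  continuous f.
Proof.
move=> C0 fB fb x.
apply/(@cvgrPdist_lt _ _ _ (nbhs x)) => e e0; near=> z; rewrite -fB.
rewrite (le_lt_trans (fb _))// -?ltr_pdivlMl//.
by near: z; apply: cvgr_dist_lt => //; rewrite mulr_gt0 ?invr_gt0.
Unshelve. all: by end_near. Qed.

Lemma part_le (u : nat -> R) n : (forall k, 0 <= u k) ->
  ((\sum_(0 <= k < n) u k)%:E <= \sum_(k <oo) (u k)%:E)%E.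
Proof.
move=> u0; rewrite -sumEFin; apply: nneseries_lim_ge => k _ _; rewrite lee_fin.
exact: u0.
Qed.

End Aux.
Arguments lin_facts {R V f}.
Arguments cont_of_bound {R V f}.
Arguments part_le {R}.
Section HBsec.
Variables (R : realType) (X : normedModType R).

Definition subl (q : X -> R) :=
  (forall x y, q (x + y) <= q x + q y) /\ (forall (a : R) x, 0 <= a -> q (a *: x) <= a * q x).

Lemma subl0 q : subl q -> q 0 = 0.
Proof.
move=> [Hs Hh]; apply/eqP; rewrite eq_le; apply/andP; split.
  by have := Hh 0 0 (lexx _); rewrite scale0r mul0r.
by have := Hs 0 0; rewrite addr0 -{1}(addr0 (q 0)) lerD2l.
Qed.

Lemma sublZ q a x : subl q -> 0 <= a -> q (a *: x) = a * q x.
Proof.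
move=> sq; rewrite le_eqVlt => /orP[/eqP<-|a0].
  by rewrite scale0r mul0r subl0.
apply/eqP; rewrite eq_le (sq.2 _ _ (ltW a0)) /=.
have := sq.2 a^-1 (a *: x); rewrite invr_ge0 ltW // scalerA mulVf ?gt_eqF // scale1r.
by move=> /(_ isT); rewrite -(ler_pM2l a0) mulrA mulfV ?gt_eqF // mul1r.
Qed.

Lemma subl_neg q x : subl q -> - q (- x) <= q x.
Proof.
move=> sq; have := sq.1 x (- x); rewrite subrr subl0 //.
by rewrite -lerBlDr add0r.
Qed.

Definition Tset (q : X -> R) (y : X) (b : R) (x : X) := [set r : R | exists2 t : R, 0 <= t & r = q (x + t *: y) - t * b].
Definition Tq (q : X -> R) (y : X) (b : R) (x : X) := inf (Tset q y b x).

Section Tprops.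
Variables (q : X -> R) (y : X) (b : R).
Hypotheses (sq : subl q) (bq : b <= q y).

Lemma Tset_lb x : lbound (Tset q y b x) (- q (- x)).
Proof.
move=> r [t t0 ->]; have := sq.1 (x + t *: y) (- x).
rewrite addrC addKr sublZ // => H.
have := ler_wpM2l t0 bq; lra.
Qed.

Lemma Tset_n0 x : Tset q y b x !=set0.
Proof. by exists (q (x + 0 *: y) - 0 * b); exists 0. Qed.

Lemma Tq_le x {t} : 0 <= t -> Tq q y b x <= q (x + t *: y) - t * b.
Proof.
move=> t0; apply: ge_inf; first by exists (- q (- x)); exact: Tset_lb.
by exists t.
Qed.

Lemma Tq_ge x : - q (- x) <= Tq q y b x.
Proof. by apply: lb_le_inf; [exact: Tset_n0|exact: Tset_lb]. Qed.

Lemma Tq_leq x : Tq q y b x <= q x.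
Proof. by have := Tq_le x (lexx 0); rewrite scale0r addr0 mul0r subr0. Qed.

Lemma Tq_subl : subl (Tq q y b).
Proof.
split.
  move=> x x'.
  have H : forall s t, 0 <= s -> 0 <= t ->
      Tq q y b (x + x') <= (q (x + s *: y) - s * b) + (q (x' + t *: y) - t * b).
    move=> s t s0 t0; apply: (le_trans (Tq_le _ (addr_ge0 s0 t0))).
    rewrite addrACA -opprD -mulrDl lerD2r scalerDl addrACA; exact: sq.1.
  rewrite -lerBlDr; apply: (@lb_le_inf _ (Tset q y b x)); first exact: Tset_n0.
  move=> r [s s0 ->]; rewrite lerBlDr [_ + Tq _ _ _ x']addrC -lerBlDr.
  apply: (@lb_le_inf _ (Tset q y b x')); first exact: Tset_n0.
  move=> r' [t t0 ->]; rewrite lerBlDr [_ + (q _ - _)]addrC; exact: H.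
move=> a x; rewrite le_eqVlt => /orP[/eqP<-|a0].
  rewrite scale0r mul0r; have := Tq_leq 0; by rewrite (subl0 _ sq).
rewrite -ler_pdivrMl //; apply: (@lb_le_inf _ (Tset q y b x)); first exact: Tset_n0.
move=> r [t t0 ->]; rewrite ler_pdivrMl //.
have := Tq_le (a *: x) (mulr_ge0 (ltW a0) t0).
by rewrite -scalerA -scalerDr (sublZ _ _ _ sq (ltW a0)) mulrBr mulrA.
Qed.
End Tprops.
Arguments Tq_le {q y b} sq bq x {t}.
Arguments Tq_leq {q y b}.
Arguments Tq_subl {q y b}.

Variable x0 : X.

Definition PP (q : X -> R) := subl q /\ (forall x, q x <= `|x|) /\ q (- x0) <= - `|x0|.

Lemma norm_subl : subl (fun x : X => `|x|).
Proof.
split; first by move=> x y; exact: ler_normD.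
by move=> a x a0; rewrite normrZ ger0_norm.
Qed.

Definition p0 := Tq (fun x : X => `|x|) x0 `|x0|.

Lemma PP_p0 : PP p0.
Proof.
split; first exact: Tq_subl norm_subl (lexx _).
split; first by move=> x; exact: Tq_leq norm_subl (lexx _) x.
have := Tq_le norm_subl (lexx _) (- x0) (ler01).
have := @Tq_le _ x0 `|x0| norm_subl (lexx _) (- x0) 1 ler01.
by rewrite scale1r addNr normr0 mul1r sub0r.
Qed.

Lemma PP_lb q x : PP q -> - `|x| <= q x.
Proof.
move=> [sq [qn _]]; apply: (le_trans _ (subl_neg _ x sq)).
by rewrite lerN2 -(normrN x); exact: qn.
Qed.

Definition TT := {q : X -> R | PP q}.
Definition Rl (s t : TT) : bool := `[< forall x, sval t x <= sval s x >].

Lemma exists_min : exists t : TT, forall s : TT, Rl t s -> s = t.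
Proof.
apply: Zorn.
- by move=> t; apply/asboolP => x.
- move=> r s t /asboolP H1 /asboolP H2; apply/asboolP => x; exact: le_trans (H2 x) (H1 x).
- move=> [s ps] [t pt] /asboolP H1 /asboolP H2; apply: eq_exist.
  by apply: funext => x; apply/eqP; rewrite eq_le H1 H2.
move=> A Atot.
have [[a Aa]|A0] := pselect (exists a, A a); last first.
  exists (exist _ p0 PP_p0) => s As; exfalso; apply: A0; by exists s.
pose S x := [set r : R | exists2 s, A s & r = sval s x].
pose Q x := inf (S x).
have Sn0 x : S x !=set0 by exists (sval a x); exists a.
have Slb x : lbound (S x) (- `|x|) by move=> r [s _ ->]; exact: PP_lb (svalP s).
have Qle x s : A s -> Q x <= sval s x.
  by move=> As; apply: ge_inf; [exists (- `|x|)|exists s].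
have Qge x m : (forall s, A s -> m <= sval s x) -> m <= Q x.
  by move=> H; apply: lb_le_inf => // r [s As ->]; exact: H.
have PQ : PP Q.
  split; [split|split].
  - move=> x y; rewrite -lerBlDr; apply: (Qge) => s As.
    rewrite lerBlDr [_ + Q y]addrC -lerBlDr; apply: (Qge) => s' As'.
    rewrite lerBlDr [_ + sval s x]addrC.
    have [/asboolP H|/asboolP H] := Atot s s' As As'.
    + apply: le_trans (Qle _ _ As') _; apply: le_trans ((svalP s').1.1 x y) _.
      by rewrite lerD2r H.
    + apply: le_trans (Qle _ _ As) _; apply: le_trans ((svalP s).1.1 x y) _.
      by rewrite lerD2l H.
  - move=> c x; rewrite le_eqVlt => /orP[/eqP<-|c0].
      rewrite scale0r mul0r; apply: le_trans (Qle _ _ Aa) _.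
      by rewrite (subl0 _ (svalP a).1).
    rewrite -ler_pdivrMl //; apply: (Qge) => s As; rewrite ler_pdivrMl //.
    exact: le_trans (Qle _ _ As) ((svalP s).1.2 c x (ltW c0)).
  - by move=> x; apply: le_trans (Qle _ _ Aa) ((svalP a).2.1 x).
  - by apply: le_trans (Qle _ _ Aa) ((svalP a).2.2).
exists (exist _ Q PQ) => s As; apply/asboolP => x /=; exact: Qle.
Qed.

Lemma HB_norming : exists g : X -> R,
  (forall (a : R) u v, g (a *: u + v) = a * g u + g v) /\
  (forall u, `|g u| <= `|u|) /\ g x0 = `|x0|.
Proof.
have [[t [st [tn tx0]]] Ht] := exists_min.
have odd y : t (- y) = - t y.
  have ty : t y <= t y by [].
  have PT : PP (Tq t y (t y)).
    split; first exact: Tq_subl.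
    split; first by move=> x; exact: le_trans (Tq_leq st ty x) (tn x).
    exact: le_trans (Tq_leq st ty _) tx0.
  have := Ht (exist _ _ PT); rewrite /=.
  move=> /(_ (introT (asboolP _) (fun x => Tq_leq st ty x))) [] E.
  apply/eqP; rewrite eq_le; apply/andP; split.
    have := Tq_le st ty (- y) ler01; rewrite E scale1r addNr (subl0 _ st) mul1r.
    by rewrite sub0r.
  by rewrite lerNl; exact: subl_neg.
have tZ a u : t (a *: u) = a * t u.
  have [a0|a0] := leP 0 a; first exact: sublZ.
  rewrite -(opprK a) scaleNr odd sublZ ?oppr_ge0 ?ltW //; lra.
have tD u v : t (u + v) = t u + t v.
  apply/eqP; rewrite eq_le st.1 /=.
  have := st.1 (- u) (- v); rewrite -opprD !odd; lra.
exists t; split; first by move=> a u v; rewrite tD tZ.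
split.
  move=> u; rewrite ler_norml tn andbT lerNl -odd -(normrN u); exact: tn.
apply/eqP; rewrite eq_le tn /=; have := tx0; rewrite odd; lra.
Qed.

End HBsec.
Lemma series_bound (R : realType) (al w nk : nat -> R) (M : R) :
  (forall k, `|w k| <= nk k) -> (forall k, 0 <= al k) ->
  (forall n, \sum_(0 <= k < n) al k ^+ 2 <= 1) ->
  (forall n, \sum_(0 <= k < n) nk k ^+ 2 <= M) ->
  cvgn (series (fun k => al k * w k)) /\
  `|limn (series (fun k => al k * w k))| <= (1 + M) / 2.
Proof.
move=> wn al0 hal hnk.
set a := fun k => al k * w k.
have ab k : `|a k| <= (al k ^+ 2 + nk k ^+ 2) / 2.
  rewrite /a normrM (ger0_norm (al0 k)).
  have nk0 : 0 <= nk k by exact: le_trans (normr_ge0 _) (wn k).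
  have := ler_wpM2l (al0 k) (wn k).
  have := sqr_ge0 (al k - nk k); nra.
have pb n : [normed series a] n <= (1 + M) / 2.
  rewrite /series /=.
  apply: le_trans (ler_sum _ (fun k _ => ab k)) _.
  rewrite -mulr_suml big_split /= ler_pM2r ?invr_gt0 //.
  exact: lerD (hal n) (hnk n).
have cn : cvgn [normed series a].
  apply: nondecreasing_is_cvgn.
    by apply: nondecreasing_series => k _ _; exact: normr_ge0.
  by exists ((1 + M) / 2) => _ [n _ <-]; exact: pb.
split; first exact: normed_cvg.
apply: le_trans (lim_series_norm cn) _.
apply: limr_le => //; exact: nearW.
Qed.

Lemma Lam_facts (R : realType) (X : completeNormedModType R)
  (Y : nat -> completeNormedModType R) (N : forall k, X -> Y k -> R) xs ys al :
  l2sum_setting N -> in_Lambda N xs ys al ->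
  [/\ forall x, `|xs x| <= `|x|, forall k v, `|ys k v| <= `|v|
    & forall n, \sum_(0 <= k < n) al k ^+ 2 <= 1].
Proof.
move=> HN [[xl _] [yf [hb [ha hs]]]].
have [xs0 _ _ _] := lin_facts xl.
have ys0 k : ys k 0 = 0 by have [yl _] := yf k; have [] := lin_facts yl.
split.
- move=> x; have := hb 0%N x 0; rewrite ys0 addr0.
  by have [_ [_ [_ [-> _]]]] := HN 0%N.
- move=> k v; have := hb k 0 v; rewrite xs0 add0r.
  by have [_ [_ [_ [_ [-> _]]]]] := HN k.
- move=> n; rewrite -lee_fin; apply: le_trans hs; apply: part_le => k.
  exact: sqr_ge0.
Qed.
Arguments Lam_facts {R X Y N xs ys al}.

Lemma Sig_facts (R : realType) (X : completeNormedModType R)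
  (Y : nat -> completeNormedModType R) (x : X) (y : forall k, Y k) :
  in_Sigma x y -> exists M, forall n, \sum_(0 <= k < n) `|y k| ^+ 2 <= M.
Proof.
rewrite /in_Sigma => HS.
have pl n := @part_le R (fun k => `|y k| ^+ 2) n (fun k => sqr_ge0 _).
have S0 := pl 0%N; rewrite big_geq // in S0.
have [r Sr] : exists r : R, (\sum_(k <oo) (`|y k| ^+ 2)%:E)%E = r%:E.
  by move: HS S0; case: (\sum_(k <oo) _)%E => // r _ _; exists r.
by exists r => n; rewrite -lee_fin -Sr; exact: pl.
Qed.
Arguments Sig_facts {R X Y x y}.

Lemma Lam_eval_bound (R : realType) (X : completeNormedModType R)
  (Y : nat -> completeNormedModType R) (N : forall k, X -> Y k -> R)
  (x : X) (y : forall k, Y k) M xs ys al :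
  l2sum_setting N -> in_Lambda N xs ys al ->
  (forall n, \sum_(0 <= k < n) `|y k| ^+ 2 <= M) ->
  cvgn (series (fun k => al k * ys k (y k))) /\
  `|Lambda_eval xs ys al x y| <= `|x| + (1 + M) / 2.
Proof.
move=> HN HL HM; have [hx hy hal] := Lam_facts HN HL.
have al0 k : 0 <= al k by have [_ [_ [_ [/(_ k) /andP[] ]]]] := HL.
have [cv bd] := @series_bound R al (fun k => ys k (y k)) (fun k => `|y k|) M
  (fun k => hy k (y k)) al0 hal HM.
split => //; rewrite /Lambda_eval; apply: le_trans (ler_normD _ _) _.
exact: lerD (hx x) bd.
Qed.
Arguments Lam_eval_bound {R X Y N} x {y M xs ys al}.

Lemma Sigma_set_ub (R : realType) (X : completeNormedModType R)
  (Y : nat -> completeNormedModType R) (N : forall k, X -> Y k -> R)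
  (x : X) (y : forall k, Y k) : l2sum_setting N -> in_Sigma x y ->
  has_ubound [set r : R | exists xs ys alpha,
         in_Lambda N xs ys alpha /\ r = `|Lambda_eval xs ys alpha x y| ].
Proof.
move=> HN /Sig_facts [M HM]; exists (`|x| + (1 + M) / 2).
move=> r [xs [ys [al [HL ->]]]].
by have [] := Lam_eval_bound x HN HL HM.
Qed.
Arguments Sigma_set_ub {R X Y N} x y.

Lemma Sigma_set_n0 (R : realType) (X : completeNormedModType R)
  (Y : nat -> completeNormedModType R) (N : forall k, X -> Y k -> R)
  (x : X) (y : forall k, Y k) : l2sum_setting N ->
  [set r : R | exists xs ys alpha,
         in_Lambda N xs ys alpha /\ r = `|Lambda_eval xs ys alpha x y| ] !=set0.
Proof.
move=> HN.
have f0 (V : normedModType R) : is_functional (fun _ : V => (0 : R)).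
  split; first by move=> *; rewrite mulr0 addr0.
  by move=> z; exact: cvg_cst.
exists `|Lambda_eval (fun _ => 0) (fun k _ => 0) (fun _ => 0) x y|.
exists (fun _ => 0), (fun k _ => 0), (fun _ => 0); split => //.
split; first exact: f0.
split; first by move=> k; exact: f0.
split.
  move=> k u v; rewrite addr0 normr0.
  have [_ [_ [_ [_ [_ H]]]]] := HN k; exact: le_trans (normr_ge0 _) (H u v).
split; first by move=> k; rewrite lexx ler01.
rewrite eseries0 // => i _ _; by rewrite expr0n.
Qed.
Arguments Sigma_set_n0 {R X Y N} x y.

Theorem lemma2p6 (R : realType) (X : completeNormedModType R)
  (Y : nat -> completeNormedModType R) (N : forall k, X -> Y k -> R)
  (X1 X2 : set X) (c : R) :
  l2sum_setting N ->
  direct_sum_decomp X1 X2 ->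
  0 < c ->
  (forall k x1 x2 (yk : Y k), X1 x1 -> X2 x2 ->
     `|x1| + c * N k x2 yk <= N k (x1 + x2) yk) ->
  forall x1 x2 (y : forall k, Y k), X1 x1 -> X2 x2 ->
    in_Sigma (x1 + x2) y ->
    `|x1| + c * Sigma_norm N x2 y <= Sigma_norm N (x1 + x2) y.
Proof.
move=> HN [[X10 [X1D X1Z]] [[X20 [X2D X2Z]] [Hex Hint]]] c0 Hc x1 x2 y X1x1 X2x2 HS.
have HS2 : in_Sigma x2 y by [].
rewrite /Sigma_norm.
set E2 := [set r : R | _]; set E1 := [set r : R | _].
have ub1 : has_ubound E1 by exact: Sigma_set_ub.
have n2 : E2 !=set0 by exact: Sigma_set_n0.
suff H : forall r, E2 r -> `|x1| + c * r <= sup E1.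
  have : sup E2 <= (sup E1 - `|x1|) / c.
    apply: ge_sup => // r Hr; rewrite ler_pdivlMr //; have := H r Hr; lra.
  rewrite ler_pdivlMr //; lra.
move=> r [xs [ys [al [HL ->]]]].
apply: (ub_le_sup ub1).
have [g [gl [gb gx1]]] := @HB_norming R X x1.
have [gl0 gB gD gZ] := lin_facts gl.
have [P1 HP1] := choice Hex.
have [P2 HP2] := choice HP1.
have X1B a b : X1 a -> X1 b -> X1 (a - b).
  by move=> Ha Hb; rewrite -scaleN1r; apply: X1D => //; exact: X1Z.
have X2B a b : X2 a -> X2 b -> X2 (a - b).
  by move=> Ha Hb; rewrite -scaleN1r; apply: X2D => //; exact: X2Z.
have uniq a1 a2 b1 b2 : X1 a1 -> X2 a2 -> X1 b1 -> X2 b2 ->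
    a1 + a2 = b1 + b2 -> a1 = b1 /\ a2 = b2.
  move=> Ha1 Ha2 Hb1 Hb2 E.
  have E' : a1 - b1 = b2 - a2.
    apply/eqP; rewrite -subr_eq0; apply/eqP.
    by rewrite -(subrr (b1 + b2)) -{1}E opprB opprD addrACA.
  have d0 : a1 - b1 = 0 by apply: Hint; [exact: X1B | rewrite E'; exact: X2B].
  move/eqP: d0; rewrite subr_eq0 => /eqP d0; split => //.
  by move: E; rewrite d0 => /addrI.
have P1m u : X1 (P1 u) by case: (HP2 u).
have P2m u : X2 (P2 u) by case: (HP2 u) => _ [].
have Pu u : u = P1 u + P2 u by case: (HP2 u) => _ [].
have Plin a u v : P1 (a *: u + v) = a *: P1 u + P1 v /\
                  P2 (a *: u + v) = a *: P2 u + P2 v.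
  apply: uniq.
  - exact: P1m.
  - exact: P2m.
  - by apply: X1D; [exact: X1Z|].
  - by apply: X2D; [exact: X2Z|].
  by rewrite -Pu addrACA -scalerDr -!Pu.
have Px : P1 (x1 + x2) = x1 /\ P2 (x1 + x2) = x2.
  by apply: uniq => //; rewrite -Pu.
have Nb k u v : `|P1 u| + c * N k (P2 u) v <= N k u v.
  by rewrite {3}(Pu u); apply: Hc.
have [M HM] := Sig_facts HS2.
have [cv _] := Lam_eval_bound x2 HN HL HM.
set L := Lambda_eval xs ys al x2 y.
have [c' [hc' hcL]] : exists c', `|c'| = c /\ c' * L = c * `|L|.
  have [L0|L0] := leP 0 L.
    by exists c; rewrite gtr0_norm // ger0_norm.
  by exists (- c); rewrite normrN gtr0_norm // ltr0_norm // mulrN mulNr.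
have [[xl _] [yf [hb [ha hs]]]] := HL.
have [xs0 xsB xsD xsZ] := lin_facts xl.
pose w u := g (P1 u) + c' * xs (P2 u).
pose ys' k v := c' * ys k v.
have wb k u v : `|w u + ys' k v| <= N k u v.
  rewrite /w /ys' -addrA -mulrDr; apply: le_trans (ler_normD _ _) _.
  apply: le_trans (Nb k u v); apply: lerD; first exact: gb.
  rewrite normrM hc' ler_pM2l //; exact: hb.
have ys0 k : ys k 0 = 0 by have [yl _] := yf k; have [] := lin_facts yl.
have wlin a u v : w (a *: u + v) = a * w u + w v.
  rewrite /w; have [-> ->] := Plin a u v; rewrite gl xl; ring.
have [_ wB _ _] := lin_facts wlin.
exists w, ys', al; split.
  split.
    split => //; apply: (cont_of_bound 1 ltr01 wB) => u.
    have := wb 0%N u 0; rewrite /ys' ys0 mulr0 addr0 mul1r.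
    by have [_ [_ [_ [-> _]]]] := HN 0%N.
  split.
    move=> k; have [yl _] := yf k; have [_ yB _ _] := lin_facts yl.
    have ylin : forall (a : R) u v, ys' k (a *: u + v) = a * ys' k u + ys' k v.
      by move=> a u v; rewrite /ys' yl; ring.
    split => //; apply: (cont_of_bound c c0) => [u v|u].
      by rewrite /ys' yB mulrBr.
    rewrite /ys' normrM hc' ler_pM2l //.
    have := hb k 0 u; rewrite xs0 add0r.
    by have [_ [_ [_ [_ [-> _]]]]] := HN k.
  by split => //; split.
have -> : Lambda_eval w ys' al (x1 + x2) y = `|x1| + c * `|L|.
  rewrite /Lambda_eval /w /ys' Px.1 Px.2 gx1 -hcL /L /Lambda_eval.
  have -> : (fun k => al k * (c' * ys k (y k))) = c' *: (fun k => al k * ys k (y k)).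
    by apply: funext => k /=; rewrite mulrCA.
  rewrite lim_seriesZ //; rewrite /GRing.scale /=; ring.
symmetry; apply: ger0_norm; apply: addr_ge0 => //; apply: mulr_ge0 => //; exact: ltW.
Qed.
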